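(* Let $I$ be a countable index set with nested finite subsets $I_1\subset I_2\subset\cdots$, $\bigcup_nI_n=I$, let $W$ be a compact Hausdorff space, $m:\mathcal{F}[I]\to C^*(W)$ a frame measure function and $p\in\mathbb{N}^*$. Then there exists $w_p\in W$ such that $\mu(\mathcal{F})(p)=m(\mathcal{F})(w_p)$ for all $\mathcal{F}\in\mathcal{F}[I]$.
   Context: $\mathcal{F}[I]$: families $\{f_i\}_{i\in I}$ in a separable Hilbert space that are frames for their closed span; $\tilde f_i=S^{-1}f_i$ canonical dual; $b_n(\mathcal{F})=\sum_{i\in I_n}\langle f_i,\tilde f_i\rangle$, $a_n(\mathcal{F})=b_n(\mathcal{F})/|I_n|$. $\mathbf{x}\approx\mathbf{y}$ iff $\lim_n(x_n-y_n)/|I_n|=0$; for nonnegative sequences $\mathbf{y}\leqq\mathbf{x}$ iff $\liminf_n(x_n-y_n)/|I_n|\ge0$. Frame compatible sequences: nonnegative $\mathbf{x}$ with $0\le x_1\le|I_1|$, $0\le x_i-x_{i-1}\le|I_i\setminus I_{i-1}|$; $X$ their set, $X^+=\{c\mathbf{x}:\mathbf{x}\in X, c\ge0\}$, $X^{\mathbb{R}}=X^+-X^+$. $C^*(W)$: real continuous functions on $W$. A sequence measure function is a linear $m:X^{\mathbb{R}}\to C^*(W)$ with $m(\mathbf{x})=m(\mathbf{y})\iff\mathbf{x}\approx\mathbf{y}$ on $X^{\mathbb{R}}$, $m(\mathbf{x})\le m(\mathbf{y})\iff\mathbf{x}\leqq\mathbf{y}$ on $X^+$, and $m((|I_1|,|I_2|,\dots))=1$;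 a frame measure function is $\mathcal{F}\mapsto m(b(\mathcal{F}))$ for such $m$. $\mathbb{N}^*$: free ultrafilters on $\mathbb{N}$; $p\text{-}\lim$ the ultrafilter limit of a bounded sequence. The ultrafilter frame measure function is $\mu(\mathcal{F})(p)=p\text{-}\lim_n a_n(\mathcal{F})$. *)

(* Defs.v *)
From HB Require Import structures.
From mathcomp Require Import all_boot all_order all_algebra.
From mathcomp Require Import all_classical all_reals all_analysis.
From mathcomp Require Import finmap complex.
From Stdlib Require Import ClassicalEpsilon.
Import Order.TTheory GRing.Theory Num.Theory.
Import numFieldNormedType.Exports.

Set Implicit Arguments.
Unset Strict Implicit.
Unset Printing Implicit Defensive.

Local Open Scope classical_set_scope.
Local Open Scope ring_scope.

Section Hilbert.
Variables (R : realType) (H : lmodType R[i]) (ip : H -> H -> R[i]).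

Definition inner_product : Prop :=
  [/\ forall (a : R[i]) (x y z : H), ip (a *: x + y) z = a * ip x z + ip y z,
      forall x y : H, ip y x = (ip x y)^*,
      forall x : H, 0 <= ip x x
    & forall x : H, ip x x = 0 -> x = 0].

Definition hnorm (x : H) : R := Num.sqrt (complex.Re (ip x x)).
Definition hdist (x y : H) : R := hnorm (x - y).

Definition hcvg (u : nat -> H) (l : H) : Prop :=
  forall e : R, 0 < e -> exists N : nat, forall n, (N <= n)%N -> hdist (u n) l < e.

Definition hcauchy (u : nat -> H) : Prop :=
  forall e : R, 0 < e -> exists N : nat,
    forall n k, (N <= n)%N -> (N <= k)%N -> hdist (u n) (u k) < e.

Definition hcomplete : Prop := forall u, hcauchy u -> exists l, hcvg u l.

Definition hclosure (A : set H) : set H :=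
  [set x | forall e : R, 0 < e -> exists y, A y /\ hdist x y < e].

Definition hseparable : Prop :=
  exists D : set H, countable D /\ forall x, hclosure D x.

Definition hlim (u : nat -> H) : H := epsilon (inhabits 0) (hcvg u).

Variable I : choiceType.

Definition hspan (F : I -> H) : set H :=
  [set x | exists (s : seq I) (c : I -> R[i]), x = \sum_(i <- s) c i *: F i].

Definition closed_span (F : I -> H) : set H := hclosure (hspan F).

Definition abs2 (z : R[i]) : R := complex.Re (z * z^*).

Definition frame_for_span (F : I -> H) : Prop :=
  exists A B : R, 0 < A /\ 0 < B /\
    forall g, closed_span F g ->
      ((A * hnorm g ^+ 2)%:E <= \esum_(i in [set: I]) (abs2 (ip g (F i)))%:E
        <= (B * hnorm g ^+ 2)%:E)%E.

Variable Iseq : nat -> {fset I}.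

(* frame operator S g = sum_i <g,f_i> f_i (the series converges unconditionally
   for a frame; we take the limit along the exhaustion I_n) *)
Definition frame_op (F : I -> H) (g : H) : H :=
  hlim (fun n => \sum_(i <- Iseq n) ip g (F i) *: F i).

(* canonical dual  f~_i = S^{-1} f_i, S seen as an operator on the closed span *)
Definition canonical_dual (F : I -> H) (i : I) : H :=
  epsilon (inhabits 0) (fun g => closed_span F g /\ frame_op F g = F i).

Definition b_seq (F : I -> H) (n : nat) : R :=
  \sum_(i <- Iseq n) complex.Re (ip (F i) (canonical_dual F i)).

Definition card_seq (n : nat) : R := (#|` Iseq n|)%:R.

Definition a_seq (F : I -> H) (n : nat) : R := b_seq F n / card_seq n.

End Hilbert.

(* Sequences are indexed from 0: x 0 corresponds to x_1 of the paper. *)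
Section Sequences.
Variables (R : realType) (I : choiceType) (Iseq : nat -> {fset I}).

Local Notation card := (card_seq R Iseq).

Definition seq_approx (x y : nat -> R) : Prop :=
  (fun n => (x n - y n) / card n) @ \oo --> (0 : R).

Definition seq_le (y x : nat -> R) : Prop :=
  (0 <= limn_einf (fun n => ((x n - y n) / card n)%:E))%E.

Definition frame_compatible (x : nat -> R) : Prop :=
  [/\ forall n, 0 <= x n,
      0 <= x 0%N <= card 0%N
    & forall n, 0 <= x n.+1 - x n <= (#|` (Iseq n.+1 `\` Iseq n)%fset|)%:R].

Definition Xplus (x : nat -> R) : Prop :=
  exists (c : R) (y : nat -> R), 0 <= c /\ frame_compatible y /\ x = (fun n => c * y n).

Definition XR (x : nat -> R) : Prop :=
  exists y z, Xplus y /\ Xplus z /\ x = (fun n => y n - z n).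

Definition sequence_measure_function (W : topologicalType)
    (m : (nat -> R) -> W -> R) : Prop :=
  [/\ forall x, XR x -> continuous (m x),
      forall (x y : nat -> R) (a b : R), XR x -> XR y ->
        m (fun n => a * x n + b * y n) = (fun w => a * m x w + b * m y w),
      forall x y, XR x -> XR y -> (m x = m y <-> seq_approx x y),
      forall x y, Xplus x -> Xplus y -> ((forall w, m x w <= m y w) <-> seq_le x y)
    & m card = (fun _ => 1)].

End Sequences.

Definition free_ultrafilter (p : set_system nat) : Prop :=
  UltraFilter p /\ (forall n : nat, exists A, p A /\ ~ A n).

Definition plim (R : realType) (p : set_system nat) (u : nat -> R) : R :=
  epsilon (inhabits 0) (fun L : R => forall e : R, 0 < e -> p [set n | `|u n - L| < e]).

Definition ultra_mu (R : realType) (H : lmodType R[i]) (ip : H -> H -> R[i])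
    (I : choiceType) (Iseq : nat -> {fset I}) (F : I -> H) (p : set_system nat) : R :=
  plim p (a_seq ip Iseq F).

(* Main.v *)
Require Import Defs.
From HB Require Import structures.
From mathcomp Require Import all_boot all_order all_algebra.
From mathcomp Require Import all_classical all_reals all_analysis.
From mathcomp Require Import finmap complex.
From mathcomp Require Import ring lra.
From Stdlib Require Import ClassicalEpsilon Classical.
Set Implicit Arguments.
Unset Strict Implicit.
Unset Printing Implicit Defensive.
Import Order.TTheory GRing.Theory Num.Theory.
Import numFieldNormedType.Exports.
Local Open Scope classical_set_scope.
Local Open Scope ring_scope.

Section Plim.
Variables (R : realType) (p : set_system nat).
Hypothesis pU : UltraFilter p.
#[local] Existing Instance pU.
Hypothesis pfree : forall n : nat, exists A, p A /\ ~ A n.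

Definition islim (u : nat -> R) (L : R) :=
  forall e : R, 0 < e -> p [set n | `|u n - L| < e].

Lemma p_ge N : p [set n | (N <= n)%N].
Proof.
elim: N => [|N IH]; first by apply: filterS filterT => n.
have [A [pA nAN]] := pfree N.
apply: filterS (filterI IH pA) => n [h1 h2] /=.
rewrite ltn_neqAle h1 andbT; apply/eqP => eN; apply: nAN; by rewrite eN.
Qed.

Lemma islim_unique u L1 L2 : islim u L1 -> islim u L2 -> L1 = L2.
Proof.
move=> h1 h2; have [//|hne] := eqVneq L1 L2; exfalso.
have e0 : 0 < `|L1 - L2| / 2 by rewrite divr_gt0 // normr_gt0 subr_eq0.
have [n [/= a b]] := filter_ex (filterI (h1 _ e0) (h2 _ e0)).
have : `|L1 - L2| <= `|u n - L1| + `|u n - L2|.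
  have -> : L1 - L2 = (u n - L2) - (u n - L1) by ring.
  by rewrite [X in _ <= X]addrC; apply: ler_normB.
lra.
Qed.

Lemma islim_plim u L : islim u L -> plim p u = L.
Proof.
move=> h; apply: (@islim_unique u _ _ _ h).
exact: (epsilon_spec (inhabits (0:R)) (islim u) (ex_intro _ L h)).
Qed.

Lemma islim_exists u M : (forall n, `|u n| <= M) -> exists L, islim u L.
Proof.
move=> hM.
have UF : UltraFilter (u x @[x --> p]).
  split; first exact: fmap_proper_filter.
  move=> G GF sG; rewrite predeqE => A; split; last exact: sG.
  move=> GA; have [//|pC] := in_ultra_setVsetC (u @^-1` A) pU.
  have GC : G (~` A) by apply: sG; rewrite /= /fmap /= -preimage_setC.
  by have [x [] ] := filter_ex (filterI GA GC).
have Mc : (u x @[x --> p]) `[-M, M]%classic.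
  have pT : p setT by apply: filterT.
  have sub : setT `<=` u @^-1` `[-M, M]%classic.
    by move=> n _ /=; rewrite in_itv /= -ler_norml; exact: hM.
  exact: (filterS sub pT).
have := @segment_compact R (-M) M; rewrite compact_ultra => /(_ _ UF Mc) [L [_ cL]].
exists L => e e0; move/fcvgrPdist_lt: cL => /(_ e e0) h.
have sub : [set n | `|L - u n| < e] `<=` [set n | `|u n - L| < e].
  by move=> n /=; rewrite distrC.
exact: (filterS sub h).
Qed.

Lemma plim_spec u M : (forall n, `|u n| <= M) -> islim u (plim p u).
Proof.
move=> /islim_exists hex.
exact: (epsilon_spec (inhabits (0:R)) (islim u) hex).
Qed.

Lemma islim_lin u v a b c d : islim u a -> islim v b ->
  islim (fun n => c * u n + d * v n) (c * a + d * b).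
Proof.
move=> ha hb e e0.
have k0 : 0 < `|c| + `|d| + 1 by rewrite ltr_pwDr // addr_ge0.
have e'0 : 0 < e / (`|c| + `|d| + 1) by rewrite divr_gt0.
apply: filterS (filterI (ha _ e'0) (hb _ e'0)) => n [/= h1 h2].
set e' := e / _ in e'0 h1 h2.
have ee : e = e' * (`|c| + `|d| + 1) by rewrite /e' divfK // gt_eqF.
have -> : c * u n + d * v n - (c * a + d * b) = c * (u n - a) + d * (v n - b) by ring.
rewrite (le_lt_trans (ler_normD _ _)) // !normrM ee.
have := normr_ge0 c; have := normr_ge0 d; have := normr_ge0 (u n - a); have := normr_ge0 (v n - b).
nra.
Qed.

Lemma islim_abs u a : islim u a -> islim (fun n => `|u n|) `|a|.
Proof.
move=> h e e0; apply: filterS (h _ e0) => n /= hn.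
exact: le_lt_trans (ler_dist_dist _ _) hn.
Qed.

Lemma islim_ev u a : (exists N, forall n, (N <= n)%N -> u n = a) -> islim u a.
Proof.
move=> [N hN] e e0; apply: filterS (p_ge N) => n /= /hN ->.
by rewrite subrr normr0.
Qed.

Lemma islim_ge0 u a : islim u a ->
  (forall e : R, 0 < e -> exists N, forall n, (N <= n)%N -> - e <= u n) -> 0 <= a.
Proof.
move=> h hev; rewrite leNgt; apply/negP => a0.
have e0 : 0 < - a / 2 by rewrite divr_gt0 // oppr_gt0.
have [N hN] := hev _ e0.
have [n [/= h1 h2]] := filter_ex (filterI (h _ e0) (p_ge N)).
have := hN n h2; move: h1; rewrite ltr_norml; lra.
Qed.

End Plim.

Section Seqs.
Variables (R : realType) (I : choiceType) (Iseq : nat -> {fset I}).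
Hypothesis Hnest : forall n, (Iseq n `<=` Iseq n.+1)%fset.
Hypothesis Hcover : forall i : I, exists n, i \in Iseq n.
Hypothesis Hne : inhabited I.

Local Notation card := (card_seq R Iseq).
Definition dd (n : nat) : R := (#|` (Iseq n.+1 `\` Iseq n)%fset|)%:R.

Lemma mono_in i n k : i \in Iseq n -> (n <= k)%N -> i \in Iseq k.
Proof.
move=> hi; elim: k => [|k IH]; first by rewrite leqn0 => /eqP <-.
rewrite leq_eqVlt => /orP [/eqP <- //|]; rewrite ltnS => /IH h.
exact: (fsubsetP (Hnest k)).
Qed.

Lemma card_ge0 n : 0 <= card n. Proof. by rewrite /card_seq ler0n. Qed.
Lemma dd_ge0 n : 0 <= dd n. Proof. by rewrite /dd ler0n. Qed.

Lemma card_succ n : card n.+1 = card n + dd n.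
Proof.
rewrite /card_seq /dd cardfsDS // natrB ?fsubset_leq_card //; ring.
Qed.

Lemma card_ev_pos : exists N, forall n, (N <= n)%N -> 0 < card n.
Proof.
case: Hne => i; have [N hN] := Hcover i; exists N => n hn.
rewrite /card_seq ltr0n cardfs_gt0; apply/eqP => e.
by have := @mono_in i N n hN hn; rewrite e inE.
Qed.

Definition bnd (C : R) (x : nat -> R) :=
  [/\ 0 <= C, `|x 0%N| <= C * card 0 & forall n, `|x n.+1 - x n| <= C * dd n].

Lemma bnd_bound C x : bnd C x -> forall n, `|x n| <= C * card n.
Proof.
case=> C0 h0 hs; elim=> // n IH.
rewrite card_succ mulrDr.
have -> : x n.+1 = x n + (x n.+1 - x n) by ring.
exact: le_trans (ler_normD _ _) (lerD IH (hs n)).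
Qed.

Lemma bnd_mono C C' x : bnd C x -> C <= C' -> bnd C' x.
Proof.
case=> C0 h0 hs CC; split; first exact: le_trans CC.
  exact: le_trans h0 (ler_wpM2r (card_ge0 _) CC).
by move=> n; exact: le_trans (hs n) (ler_wpM2r (dd_ge0 _) CC).
Qed.

Lemma aux_bnd (c1 c2 a b K : R) : 0 <= c1 -> 0 <= c2 -> 0 <= a <= K -> 0 <= b <= K ->
  `|c1 * a - c2 * b| <= (c1 + c2) * K.
Proof.
move=> h1 h2 /andP [ha hA] /andP [hb hB]; rewrite ler_norml; apply/andP; split; nra.
Qed.

Lemma bnd_lin C1 C2 x y a b : bnd C1 x -> bnd C2 y ->
  bnd (`|a| * C1 + `|b| * C2) (fun n => a * x n + b * y n).
Proof.
case=> C10 h10 hs1 [C20 h20 hs2]; split.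
- by rewrite addr_ge0 // mulr_ge0.
- rewrite (le_trans (ler_normD _ _)) // !normrM mulrDl -!mulrA.
  by rewrite lerD // ler_wpM2l.
- move=> n; have -> : a * x n.+1 + b * y n.+1 - (a * x n + b * y n) =
     a * (x n.+1 - x n) + b * (y n.+1 - y n) by ring.
  rewrite (le_trans (ler_normD _ _)) // !normrM mulrDl -!mulrA.
  by rewrite lerD // ler_wpM2l.
Qed.

Lemma bnd_abs C x : bnd C x -> bnd C (fun n => `|x n|).
Proof.
case=> C0 h0 hs; split => //; first by rewrite normr_id.
by move=> n; exact: le_trans (ler_dist_dist _ _) (hs n).
Qed.

Lemma bnd_card : bnd 1 card.
Proof.
split => //; first by rewrite mul1r ger0_norm // card_ge0.
by move=> n; rewrite card_succ mul1r (_ : card n + dd n - card n = dd n) ?ger0_norm ?dd_ge0 //; ring.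
Qed.

Lemma fc_card : frame_compatible Iseq card.
Proof.
split; first exact: card_ge0.
  by rewrite card_ge0 lexx.
by move=> n; rewrite card_succ (_ : card n + dd n - card n = dd n) ?dd_ge0 ?lexx //; ring.
Qed.

Lemma Xplus_bnd (y : nat -> R) : Xplus Iseq y -> exists C, bnd C y.
Proof.
move=> [c [y' [c0 [[hp /andP [h00 h01] hs] ->]]]]; exists (c + 0); split.
- by rewrite addr0.
- have := @aux_bnd c 0 (y' 0%N) 0 (card 0) c0 (lexx 0).
  by rewrite h00 h01 lexx card_ge0 mul0r subr0 => ->.
- move=> n; have -> : c * y' n.+1 - c * y' n = c * (y' n.+1 - y' n) - 0 * 0 by ring.
  by apply: aux_bnd => //; rewrite ?lexx ?dd_ge0 ?hs.
Qed.

Lemma XR_bnd (x : nat -> R) : XR Iseq x -> exists C, bnd C x.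
Proof.
move=> [y [z [/Xplus_bnd [C1 h1] [/Xplus_bnd [C2 h2] ->]]]].
have := bnd_lin 1 (-1) h1 h2.
have -> : (fun n => 1 * y n + -1 * z n) = (fun n => y n - z n).
  by apply: funext => n; ring.
by move=> h; eexists; exact: h.
Qed.

Definition pp (a : R) := (a + `|a|) / 2.
Definition nn (a : R) := (`|a| - a) / 2.

Lemma pp_bnd a : 0 <= pp a <= `|a|.
Proof.
rewrite /pp; have h2 := ler_norm a.
have h3 : - a <= `|a| by rewrite -normrN ler_norm.
apply/andP; split; lra.
Qed.

Lemma nn_bnd a : 0 <= nn a <= `|a|.
Proof.
rewrite /nn; have := ler_norm a => h2.
have h3 : - a <= `|a| by rewrite -normrN ler_norm.
apply/andP; split; lra.
Qed.

Lemma ppnn a : pp a - nn a = a.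
Proof. rewrite /pp /nn; lra. Qed.

Lemma fc_of (f : R -> R) (C : R) x : 0 < C -> bnd C x ->
  (forall a, 0 <= f a <= `|a|) ->
  frame_compatible Iseq (fun n => (f (x 0%N) + \sum_(k < n) f (x k.+1 - x k)) / C).
Proof.
move=> C0 [_ h0 hs] hf; split.
- move=> n; apply: divr_ge0; last exact: ltW.
  apply: addr_ge0; first by case/andP: (hf (x 0%N)).
  by apply: sumr_ge0 => k _; case/andP: (hf (x k.+1 - x k)).
- rewrite big_ord0 addr0; apply/andP; split.
    by apply: divr_ge0; [case/andP: (hf (x 0%N))|exact: ltW].
  rewrite ler_pdivrMr // mulrC; case/andP: (hf (x 0%N)) => _ h.
  exact: le_trans h h0.
- move=> n; rewrite big_ord_recr /= -mulrBl.
  rewrite (_ : f (x 0%N) + (\sum_(i < n) f (x i.+1 - x i) + f (x n.+1 - x n)) -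
     (f (x 0%N) + \sum_(i < n) f (x i.+1 - x i)) = f (x n.+1 - x n)); last by ring.
  apply/andP; split.
    by apply: divr_ge0; [case/andP: (hf (x n.+1 - x n))|exact: ltW].
  rewrite ler_pdivrMr // mulrC; case/andP: (hf (x n.+1 - x n)) => _ h.
  exact: le_trans h (hs n).
Qed.

Lemma bnd_XR C x : bnd C x -> XR Iseq x.
Proof.
move=> hb; have C1 : 0 < C + 1 by case: hb => C0 _ _; rewrite ltr_wpDl.
have hb1 : bnd (C + 1) x by apply: bnd_mono hb _; rewrite lerDl.
set y := fun n => (pp (x 0%N) + \sum_(k < n) pp (x k.+1 - x k)) / (C + 1).
set z := fun n => (nn (x 0%N) + \sum_(k < n) nn (x k.+1 - x k)) / (C + 1).
exists (fun n => (C + 1) * y n), (fun n => (C + 1) * z n); split; [|split].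
- exists (C + 1), y; split; [exact: ltW|split => //].
  exact: fc_of C1 hb1 pp_bnd.
- exists (C + 1), z; split; [exact: ltW|split => //].
  exact: fc_of C1 hb1 nn_bnd.
- apply: funext => n; rewrite /y /z !(mulrC (C + 1)) !divfK ?gt_eqF //.
  elim: n => [|n IH]; first by rewrite !big_ord0 !addr0 ppnn.
  rewrite !big_ord_recr /=.
  have -> : pp (x 0%N) + (\sum_(i < n) pp (x i.+1 - x i) + pp (x n.+1 - x n)) -
     (nn (x 0%N) + (\sum_(i < n) nn (x i.+1 - x i) + nn (x n.+1 - x n))) =
     (pp (x 0%N) + \sum_(i < n) pp (x i.+1 - x i) -
     (nn (x 0%N) + \sum_(i < n) nn (x i.+1 - x i))) + (pp (x n.+1 - x n) - nn (x n.+1 - x n)) by ring.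
  by rewrite -IH ppnn; ring.
Qed.

Lemma XR_lin x y (a b : R) : XR Iseq x -> XR Iseq y -> XR Iseq (fun n => a * x n + b * y n).
Proof.
move=> /XR_bnd [C1 h1] /XR_bnd [C2 h2]; exact: bnd_XR (bnd_lin a b h1 h2).
Qed.

Lemma XR_abs (x : nat -> R) : XR Iseq x -> XR Iseq (fun n => `|x n|).
Proof. by move=> /XR_bnd [C h]; exact: bnd_XR (bnd_abs h). Qed.

Lemma XR_card : XR Iseq card.
Proof. exact: bnd_XR bnd_card. Qed.

Lemma Xplus_XR (y : nat -> R) : Xplus Iseq y -> XR Iseq y.
Proof. by move=> /Xplus_bnd [C h]; exact: bnd_XR h. Qed.

Lemma XR_ratio_bound (x : nat -> R) : XR Iseq x -> exists M, forall n, `|x n / card n| <= M.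
Proof.
move=> /XR_bnd [C h]; exists C => n; rewrite normrM normfV (ger0_norm (card_ge0 n)).
have [c0|c0] := eqVneq (card n) 0; first by rewrite c0 invr0 mulr0; case: h.
rewrite ler_pdivrMr; last by rewrite lt0r c0 card_ge0.
exact: bnd_bound h n.
Qed.

End Seqs.

Lemma cmpI (T : topologicalType) (J : choiceType) (D : set J) (f : J -> set T) :
  compact [set: T] -> (exists i, D i) -> (forall i, D i -> closed (f i)) ->
  finI D f -> \bigcap_(i in D) f i !=set0.
Proof.
move=> Aco [i Di] fcl finIf.
have hF : filter_from (finI_from D f) id [set: T] by exists (f i); [apply: finI_from1|].
have [q [_ clq]] := Aco _ (finI_filter finIf) hF.
exists q => j Dj; apply: (fcl j Dj) => B nB.
have := clq (f j) B; rewrite setIC; apply => //.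
by exists (f j); [apply: finI_from1|].
Qed.

Section Main.
Variables (R : realType) (I : choiceType) (Iseq : nat -> {fset I}).
Hypothesis Hnest : forall n, (Iseq n `<=` Iseq n.+1)%fset.
Hypothesis Hcover : forall i : I, exists n, i \in Iseq n.
Hypothesis Hne : inhabited I.
Variables (W : topologicalType) (m : (nat -> R) -> W -> R).
Hypothesis HWc : compact [set: W].
Hypothesis Hm : sequence_measure_function Iseq m.
Variable (p : set_system nat).
Hypothesis pU : UltraFilter p.
Hypothesis pfree : forall n : nat, exists A, p A /\ ~ A n.

Local Notation card := (card_seq R Iseq).
Local Notation XR := (XR Iseq).

Definition phi (x : nat -> R) := plim p (fun n => x n / card n).

Lemma phi_spec x : XR x -> islim p (fun n => x n / card n) (phi x).
Proof. by move=> /(XR_ratio_bound Hnest) [M hM]; exact: (plim_spec pU hM). Qed.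

Lemma phi_lin x y (a b : R) : XR x -> XR y ->
  phi (fun n => a * x n + b * y n) = a * phi x + b * phi y.
Proof.
move=> hx hy; apply: (islim_plim pU).
have := islim_lin pU a b (phi_spec hx) (phi_spec hy).
have -> : (fun n => a * (x n / card n) + b * (y n / card n)) =
  (fun n => (a * x n + b * y n) / card n) by apply: funext => n; rewrite mulrDl !mulrA.
by [].
Qed.

Lemma phi_abs x : XR x -> phi (fun n => `|x n|) = `|phi x|.
Proof.
move=> hx; apply: islim_plim; have := islim_abs pU (phi_spec hx).
have -> : (fun n => `|x n / card n|) = (fun n => `|x n| / card n).
  by apply: funext => n; rewrite normrM normfV (ger0_norm (card_ge0 _ _ _)).
by [].
Qed.

Lemma phi_card : phi card = 1.
Proof.
apply: (islim_plim pU); apply: (islim_ev pU pfree).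
have [N hN] := card_ev_pos R Hnest Hcover Hne; exists N => n /hN h.
by rewrite divff // gt_eqF.
Qed.

Lemma phi_ge0 x : XR x ->
  (forall e : R, 0 < e -> exists N, forall n, (N <= n)%N -> - e <= x n / card n) -> 0 <= phi x.
Proof. by move=> hx; exact: (islim_ge0 pU pfree (phi_spec hx)). Qed.

Lemma m_lin x y (a b : R) w : XR x -> XR y ->
  m (fun n => a * x n + b * y n) w = a * m x w + b * m y w.
Proof. by case: Hm => _ hl _ _ _ hx hy; rewrite (hl x y a b hx hy). Qed.

Lemma m_card w : m card w = 1.
Proof. by case: Hm => _ _ _ _ ->. Qed.

Lemma limn_einf_sup_eq (u : (\bar R)^nat) : limn_einf u = ereal_sup (range (einfs u)).
Proof. rewrite limn_einf_lim; apply/cvg_lim => //; exact: cvg_einfs_sup. Qed.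

Lemma m_diff u : XR u -> exists y z, [/\ Xplus Iseq y, Xplus Iseq z, u = (fun n => y n - z n)
  & forall w, m u w = m y w - m z w].
Proof.
move=> [y [z [hy [hz ->]]]]; exists y, z; split => // w.
have -> : (fun n => y n - z n) = (fun n => 1 * y n + (-1) * z n).
  by apply: funext => n; ring.
by rewrite m_lin; [ring|exact: Xplus_XR|exact: Xplus_XR].
Qed.

Lemma m_O1 u : XR u -> (forall n, 0 <= u n) -> forall w, 0 <= m u w.
Proof.
move=> /m_diff [y [z [hy hz eu hmu]]] hpos w; rewrite hmu subr_ge0.
case: Hm => _ _ _ ho _; apply: (iffRL (ho z y hz hy) _ w).
rewrite /seq_le limn_einf_sup_eq.
apply: (@le_trans _ _ (einfs (fun n => ((y n - z n) / card n)%:E) 0%N)).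
  apply: le_ereal_inf_tmp => _ [k _ <-]; rewrite lee_fin.
  by apply: divr_ge0; [have := hpos k; rewrite eu|exact: card_ge0].
by apply: ereal_sup_ubound; exists 0%N.
Qed.

Lemma m_O2 u : XR u -> (forall w, 0 <= m u w) ->
  forall e : R, 0 < e -> exists N, forall n, (N <= n)%N -> - e <= u n / card n.
Proof.
move=> /m_diff [y [z [hy hz eu hmu]]] hpos e e0.
have hle : forall w, m z w <= m y w by move=> w; rewrite -subr_ge0 -hmu.
case: Hm => _ _ _ ho _; move/(ho z y hz hy): hle.
rewrite /seq_le limn_einf_sup_eq => h.
have : ((- e)%:E < ereal_sup (range (einfs (fun n => ((y n - z n) / card n)%:E))))%E.
  by apply: lt_le_trans h; rewrite lte_fin oppr_lt0.
move=> /ereal_sup_gt [_ [N _ <-]] hN; exists N => n hn.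
rewrite -lee_fin eu; apply: (le_trans (ltW hN)).
by apply: ereal_inf_lbound; exists n.
Qed.

Lemma m_abs v w : XR v -> `|m v w| <= m (fun n => `|v n|) w.
Proof.
move=> hv; have ha := XR_abs hv.
have h1 := m_O1 (XR_lin 1 (-1) ha hv) _ w.
have h2 := m_O1 (XR_lin 1 1 ha hv) _ w.
rewrite !m_lin // in h1 h2.
rewrite ler_norml; apply/andP; split.
  suff : 0 <= 1 * m (fun n => `|v n|) w + 1 * m v w by lra.
  by apply: h2 => n; rewrite !mul1r -lerBlDr sub0r ler_normr lexx orbT.
suff : 0 <= 1 * m (fun n => `|v n|) w + -1 * m v w by lra.
by apply: h1 => n; rewrite mul1r mulN1r subr_ge0 ler_norm.
Qed.

Lemma XR_sum (s : seq (nat -> R)) (g : (nat -> R) -> nat -> R) :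
  (forall x, x \in s -> XR (g x)) -> XR (fun n => \sum_(x <- s) g x n).
Proof.
elim: s => [|a s IH] hg.
  have := XR_lin 0 0 (XR_card R Hnest) (XR_card R Hnest).
  have -> : (fun n => 0 * card n + 0 * card n) = (fun n => \sum_(x <- [::]) g x n).
    by apply: funext => n; rewrite big_nil; ring.
  by [].
have hs : forall x, x \in s -> XR (g x) by move=> x hx; apply: hg; rewrite inE hx orbT.
have := XR_lin 1 1 (hg a (mem_head _ _)) (IH hs).
have -> : (fun n => 1 * g a n + 1 * \sum_(x <- s) g x n) = (fun n => \sum_(x <- a :: s) g x n).
  by apply: funext => n; rewrite big_cons; ring.
by [].
Qed.

Lemma m_sum (s : seq (nat -> R)) (g : (nat -> R) -> nat -> R) w :
  (forall x, x \in s -> XR (g x)) ->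
  m (fun n => \sum_(x <- s) g x n) w = \sum_(x <- s) m (g x) w.
Proof.
elim: s => [|a s IH] hg.
  have -> : (fun n => \sum_(x <- [::]) g x n) = (fun n => 0 * card n + 0 * card n).
    by apply: funext => n; rewrite big_nil; ring.
  rewrite m_lin; try exact: (XR_card R Hnest).
  by rewrite big_nil m_card; ring.
have hs : forall x, x \in s -> XR (g x) by move=> x hx; apply: hg; rewrite inE hx orbT.
have -> : (fun n => \sum_(x <- a :: s) g x n) = (fun n => 1 * g a n + 1 * \sum_(x <- s) g x n).
  by apply: funext => n; rewrite big_cons; ring.
rewrite m_lin; [|exact: hg a (mem_head _ _)|exact: XR_sum hs].
by rewrite IH // big_cons; ring.
Qed.

Lemma phi_sum (s : seq (nat -> R)) (g : (nat -> R) -> nat -> R) :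
  (forall x, x \in s -> XR (g x)) ->
  phi (fun n => \sum_(x <- s) g x n) = \sum_(x <- s) phi (g x).
Proof.
elim: s => [|a s IH] hg.
  have -> : (fun n => \sum_(x <- [::]) g x n) = (fun n => 0 * card n + 0 * card n).
    by apply: funext => n; rewrite big_nil; ring.
  rewrite phi_lin; try exact: (XR_card R Hnest).
  by rewrite big_nil phi_card; ring.
have hs : forall x, x \in s -> XR (g x) by move=> x hx; apply: hg; rewrite inE hx orbT.
have -> : (fun n => \sum_(x <- a :: s) g x n) = (fun n => 1 * g a n + 1 * \sum_(x <- s) g x n).
  by apply: funext => n; rewrite big_cons; ring.
rewrite phi_lin; [|exact: hg a (mem_head _ _)|exact: XR_sum hs].
by rewrite IH // big_cons; ring.
Qed.

Lemma phi_pos_bound y : XR y -> (forall w, 0 < m y w) -> 0 < phi y.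
Proof.
move=> XRy hpos.
pose h := fun k : nat => [set w | m y w <= k.+1%:R^-1].
have hcl : forall k, setT k -> closed (h k).
  move=> k _; case: Hm => hc _ _ _ _.
  exact: ((iffLR (continuous_closedP (m y)) (hc y XRy)) [set r | r <= k.+1%:R^-1] (@closed_le _ (k.+1%:R^-1))).
have notfin : ~ finI setT h.
  move=> fin; have [w0 hw0] := cmpI HWc (ex_intro _ 0%N Logic.I) hcl fin.
  have [k hk] := ltr_add_invr (hpos w0).
  rewrite add0r in hk; by have := hw0 k Logic.I; rewrite /h /= leNgt hk.
have [D'' hD''] : exists D'' : {fset nat}, ~ (\bigcap_(i in [set i | i \in D'']) h i !=set0).
  apply: NNPP => hn; apply: notfin => D'' _; apply: NNPP => hc; apply: hn; exists D''; exact: hc.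
pose K := (\max_(k <- D'') k)%N.
pose d : R := K.+1%:R^-1.
have d0 : 0 < d by rewrite /d invr_gt0 ltr0Sn.
have hd : forall w, d < m y w.
  move=> w; rewrite ltNge; apply/negP => hw; apply: hD''; exists w => k hk /=.
  apply: (le_trans hw); rewrite /d lef_pV2 ?posrE ?ltr0Sn // ler_nat ltnS.
  exact: (@leq_bigmax_seq _ _ xpredT (fun k => k) k hk).
have XRu : XR (fun n => 1 * y n + (- d) * card n) by apply: XR_lin => //; exact: XR_card.
have := phi_ge0 XRu (m_O2 XRu _).
rewrite phi_lin; [|exact: XRy|exact: (XR_card R Hnest)].
rewrite phi_card => hh; suff : 0 <= 1 * phi y + - d * 1 by lra.
apply: hh => w; rewrite m_lin; [|exact: XRy|exact: (XR_card R Hnest)].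
rewrite m_card; have := hd w; lra.
Qed.

Lemma exists_w : exists w, forall x, XR x -> m x w = phi x.
Proof.
have XRc := XR_card R Hnest.
have := @cmpI W _ XR (fun x => [set w | m x w = phi x]) HWc (ex_intro _ _ XRc).
case; last by move=> w hw; exists w => x hx; exact: hw x hx.
  move=> x hx; case: Hm => hc _ _ _ _.
  exact: ((iffLR (continuous_closedP (m x)) (hc x hx)) [set r | r = phi x] (@closed_eq _ (phi x))).
move=> D' sub0.
have sub : forall x, x \in D' -> XR x by move=> x hx; exact: set_mem (sub0 x hx).
pose v := fun (x : nat -> R) n => 1 * x n + (- phi x) * card n.
pose g := fun (x : nat -> R) n => `|v x n|.
have XRv : forall x, x \in D' -> XR (v x).
  by move=> x hx; apply: XR_lin; [exact: sub|exact: (XR_card R Hnest)].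
have XRg : forall x, x \in D' -> XR (g x) by move=> x hx; apply: XR_abs; exact: XRv.
pose y := fun n => \sum_(x <- D') g x n.
have XRy : XR y := XR_sum XRg.
have phiy : phi y = 0.
  rewrite /y phi_sum // big_seq big1 // => x hx.
  rewrite /g phi_abs; last exact: XRv.
  rewrite /v phi_lin; [|exact: sub|exact: (XR_card R Hnest)].
  by rewrite phi_card mulr1 mul1r addrN normr0.
have [w hw] : exists w, m y w <= 0.
  apply: NNPP => hno; have : 0 < phi y.
    apply: phi_pos_bound => // w; rewrite ltNge; apply/negP => h; apply: hno; by exists w.
  by rewrite phiy ltxx.
exists w => x0 hx0 /=.
have hge : forall x, x \in D' -> `|m (v x) w| <= m (g x) w.
  by move=> x hx; apply: m_abs; exact: XRv.
have hsum : m y w = \sum_(x <- D') m (g x) w by rewrite /y m_sum.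
have hrest : 0 <= \sum_(x <- D' | x != x0) m (g x) w.
  rewrite big_seq_cond; apply: sumr_ge0 => x /andP [hx _].
  exact: le_trans (normr_ge0 _) (hge x hx).
have hx0s : m (g x0) w <= 0.
  move: hw; rewrite hsum (bigD1_seq x0) //=; lra.
have : `|m (v x0) w| <= 0 := le_trans (hge x0 hx0) hx0s.
rewrite normr_le0 /v m_lin; [|exact: sub|exact: (XR_card R Hnest)].
rewrite m_card => /eqP; lra.
Qed.

End Main.

Section Cplx.
Variable R : realType.
Implicit Types x y z : R[i].

Lemma cReD x y : complex.Re (x + y) = complex.Re x + complex.Re y.
Proof. by case: x => a b; case: y => c d. Qed.
Lemma cImD x y : complex.Im (x + y) = complex.Im x + complex.Im y.
Proof. by case: x => a b; case: y => c d. Qed.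
Lemma cReN x : complex.Re (- x) = - complex.Re x.
Proof. by case: x => a b. Qed.
Lemma cImN x : complex.Im (- x) = - complex.Im x.
Proof. by case: x => a b. Qed.
Lemma cReM x y : complex.Re (x * y) = complex.Re x * complex.Re y - complex.Im x * complex.Im y.
Proof. by case: x => a b; case: y => c d. Qed.
Lemma cImM x y : complex.Im (x * y) = complex.Re x * complex.Im y + complex.Im x * complex.Re y.
Proof. by case: x => a b; case: y => c d. Qed.
Lemma cReJ x : complex.Re (x^*) = complex.Re x.
Proof. by case: x => a b. Qed.
Lemma cImJ x : complex.Im (x^*) = - complex.Im x.
Proof. by case: x => a b. Qed.
Lemma cRe0 : complex.Re (0 : R[i]) = 0. Proof. by []. Qed.
Lemma cIm0 : complex.Im (0 : R[i]) = 0. Proof. by []. Qed.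
Lemma cRe1 : complex.Re (1 : R[i]) = 1. Proof. by []. Qed.
Lemma cIm1 : complex.Im (1 : R[i]) = 0. Proof. by []. Qed.

Definition rc (r : R) : R[i] := Complex r 0.
Lemma rcRe r : complex.Re (rc r) = r. Proof. by []. Qed.
Lemma rcIm r : complex.Im (rc r) = 0. Proof. by []. Qed.
Lemma rcJ r : (rc r)^* = rc r. Proof. by rewrite /rc; apply/eqP; rewrite eq_complex /= oppr0 !eqxx. Qed.
Lemma rcD r s : rc (r + s) = rc r + rc s. Proof. by rewrite /rc; apply/eqP; rewrite eq_complex /= addr0 !eqxx. Qed.
Lemma rcM r s : rc (r * s) = rc r * rc s.
Proof. by rewrite /rc; apply/eqP; rewrite eq_complex /= !mulr0 !mul0r subr0 addr0 !eqxx. Qed.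
Lemma rc1 : rc 1 = 1. Proof. by []. Qed.
Lemma rcN1 : rc (-1) = -1. Proof. by rewrite /rc; apply/eqP; rewrite eq_complex /= oppr0 !eqxx. Qed.

Lemma abs2E z : abs2 z = complex.Re z ^+ 2 + complex.Im z ^+ 2.
Proof. by rewrite /abs2 cReM cReJ cImJ; ring. Qed.
Lemma abs2_ge0 z : 0 <= abs2 z.
Proof. by rewrite abs2E addr_ge0 // sqr_ge0. Qed.
Lemma abs2J z : abs2 (z^*) = abs2 z.
Proof. by rewrite !abs2E cReJ cImJ; ring. Qed.

Lemma cReE x y : complex.Re x = complex.Re y -> complex.Im x = complex.Im y -> x = y.
Proof. by case: x => a b; case: y => c d /= -> ->. Qed.

Lemma cRe_sum (T : Type) (s : seq T) (G : T -> R[i]) :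
  complex.Re (\sum_(i <- s) G i) = \sum_(i <- s) complex.Re (G i).
Proof. elim: s => [|a s IH]; by rewrite ?big_nil ?big_cons ?cReD ?IH. Qed.

Lemma amgm (a b : R[i]) (al : R) : 0 < al ->
  2 * complex.Re (a * b^*) <= al * abs2 a + al^-1 * abs2 b.
Proof.
move=> al0; rewrite cReM cReJ cImJ !abs2E.
set ra := complex.Re a; set ia := complex.Im a; set rb := complex.Re b; set ib := complex.Im b.
have be : al * al^-1 = 1 by rewrite divff // gt_eqF.
have bi0 : 0 <= al^-1 by rewrite invr_ge0 ltW.
have h1 := mulr_ge0 (ltW al0) (sqr_ge0 (ra - al^-1 * rb)).
have h2 := mulr_ge0 (ltW al0) (sqr_ge0 (ia - al^-1 * ib)).
have e1 : al * (ra - al^-1 * rb) ^+ 2 = al * ra ^+ 2 - 2 * (al * al^-1) * ra * rb + (al * al^-1) * al^-1 * rb ^+ 2 by ring.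
have e2 : al * (ia - al^-1 * ib) ^+ 2 = al * ia ^+ 2 - 2 * (al * al^-1) * ia * ib + (al * al^-1) * al^-1 * ib ^+ 2 by ring.
rewrite e1 be in h1; rewrite e2 be in h2.
lra.
Qed.

Lemma discr (a b c : R) : (forall t, 0 <= a + 2 * t * b + t ^+ 2 * c) -> 0 <= c ->
  b ^+ 2 <= a * c.
Proof.
move=> h c0; have [cz|cp] := eqVneq c 0.
  have [bz|bn] := eqVneq b 0; first by rewrite bz cz; lra.
  have := h (- (a + 1) / (2 * b)); rewrite cz.
  have : (- (a + 1) / (2 * b)) * (2 * b) = - (a + 1).
    by rewrite divfK // mulf_neq0 // pnatr_eq0.
  nra.
have c0' : 0 < c by rewrite lt0r cp.
have := h (- b / c).
have e : (- b / c) * c = - b by rewrite divfK.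
nra.
Qed.

End Cplx.

Section IP.
Variables (R : realType) (H : lmodType R[i]) (ip : H -> H -> R[i]).
Hypothesis Hip : inner_product ip.

Local Notation Re := complex.Re.
Definition rei (x y : H) : R := Re (ip x y).
Definition Qi (x : H) : R := rei x x.
Local Notation N := (hnorm ip).

Lemma ip_lin (a : R[i]) x y z : ip (a *: x + y) z = a * ip x z + ip y z.
Proof. by case: Hip => h _ _ _; apply: h. Qed.
Lemma ip_conj x y : ip y x = (ip x y)^*.
Proof. by case: Hip => _ h _ _; apply: h. Qed.
Lemma ip_ge0 x : 0 <= ip x x.
Proof. by case: Hip => _ _ h _; apply: h. Qed.
Lemma ip_def x : ip x x = 0 -> x = 0.
Proof. by case: Hip => _ _ _ h; apply: h. Qed.

Lemma ip0l z : ip 0 z = 0.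
Proof.
have := ip_lin 1 0 0 z; rewrite scale1r addr0 mul1r => h.
have : ip 0 z + 0 = ip 0 z + ip 0 z by rewrite addr0 -h.
by move/addrI.
Qed.
Lemma ip_addl x y z : ip (x + y) z = ip x z + ip y z.
Proof. by have := ip_lin 1 x y z; rewrite scale1r mul1r. Qed.
Lemma ip_scalel a x z : ip (a *: x) z = a * ip x z.
Proof. by have := ip_lin a x 0 z; rewrite addr0 ip0l addr0. Qed.
Lemma ip_oppl x z : ip (- x) z = - ip x z.
Proof. by rewrite -scaleN1r ip_scalel mulN1r. Qed.
Lemma ip_subl x y z : ip (x - y) z = ip x z - ip y z.
Proof. by rewrite ip_addl ip_oppl. Qed.
Lemma ip_suml (T : Type) (s : seq T) (G : T -> H) z :
  ip (\sum_(i <- s) G i) z = \sum_(i <- s) ip (G i) z.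
Proof. elim: s => [|a s IH]; by rewrite ?big_nil ?ip0l // !big_cons ip_addl IH. Qed.

Lemma re_sym x y : rei x y = rei y x.
Proof. by rewrite /rei (ip_conj x y) cReJ. Qed.
Lemma re_addl x y z : rei (x + y) z = rei x z + rei y z.
Proof. by rewrite /rei ip_addl cReD. Qed.
Lemma re_subl x y z : rei (x - y) z = rei x z - rei y z.
Proof. by rewrite /rei ip_subl cReD cReN. Qed.
Lemma re_scalel r x z : rei (rc r *: x) z = r * rei x z.
Proof. by rewrite /rei ip_scalel cReM rcRe rcIm mul0r subr0. Qed.
Lemma re_addr x y z : rei z (x + y) = rei z x + rei z y.
Proof. by rewrite !(re_sym z) re_addl. Qed.
Lemma re_subr x y z : rei z (x - y) = rei z x - rei z y.
Proof. by rewrite !(re_sym z) re_subl. Qed.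
Lemma re_scaler r x z : rei z (rc r *: x) = r * rei z x.
Proof. by rewrite !(re_sym z) re_scalel. Qed.
Lemma re0l z : rei 0 z = 0. Proof. by rewrite /rei ip0l. Qed.
Lemma re0r z : rei z 0 = 0. Proof. by rewrite re_sym re0l. Qed.

Lemma Q_ge0 x : 0 <= Qi x.
Proof. by have := ip_ge0 x; rewrite lecE => /andP [_]. Qed.
Lemma Q_Im x : complex.Im (ip x x) = 0.
Proof. by have := ip_ge0 x; rewrite lecE => /andP [/eqP -> _]. Qed.
Lemma Q_eq0 x : Qi x = 0 -> x = 0.
Proof. by move=> h; apply: ip_def; apply: cReE => //; rewrite Q_Im. Qed.

Lemma Q_add x y : Qi (x + y) = Qi x + 2 * rei x y + Qi y.
Proof. by rewrite /Qi re_addl !re_addr (re_sym y x); ring. Qed.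
Lemma Q_sub x y : Qi (x - y) = Qi x - 2 * rei x y + Qi y.
Proof. by rewrite /Qi re_subl !re_subr (re_sym y x); ring. Qed.
Lemma Q_scale r x : Qi (rc r *: x) = r ^+ 2 * Qi x.
Proof. by rewrite /Qi re_scalel re_scaler; ring. Qed.
Lemma Q_opp x : Qi (- x) = Qi x.
Proof. by rewrite -scaleN1r -rcN1 Q_scale; ring. Qed.

Lemma CS x y : rei x y ^+ 2 <= Qi x * Qi y.
Proof.
apply: discr; last exact: Q_ge0.
move=> t; have := Q_ge0 (x + rc t *: y).
by rewrite Q_add re_scaler Q_scale; congr (_ <= _); ring.
Qed.

Lemma N_ge0 x : 0 <= N x. Proof. exact: sqrtr_ge0. Qed.
Lemma N_sqr x : N x ^+ 2 = Qi x. Proof. by rewrite /hnorm sqr_sqrtr // Q_ge0. Qed.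

Lemma N_opp x : N (- x) = N x. Proof. by rewrite /hnorm; congr Num.sqrt; exact: Q_opp. Qed.
Lemma re_le x y : rei x y <= N x * N y.
Proof.
have := CS x y; rewrite -!N_sqr => h.
have := N_ge0 x; have := N_ge0 y => h1 h2.
have h3 := mulr_ge0 h2 h1.
rewrite -exprMn in h; nra.
Qed.
Lemma re_abs_le x y : `|rei x y| <= N x * N y.
Proof.
rewrite ler_norml re_le andbT.
have h := re_le (- x) y.
have e : rei (- x) y = - rei x y by rewrite /rei ip_oppl cReN.
rewrite e N_opp in h; lra.
Qed.

Lemma N_le_sqr x a : 0 <= a -> Qi x <= a ^+ 2 -> N x <= a.
Proof.
move=> a0 h; have -> : a = Num.sqrt (a ^+ 2) by rewrite sqrtr_sqr ger0_norm.
exact: ler_wsqrtr.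
Qed.
Lemma N_lt_sqr x a : 0 < a -> Qi x < a ^+ 2 -> N x < a.
Proof.
move=> a0 h; have -> : a = Num.sqrt (a ^+ 2) by rewrite sqrtr_sqr ger0_norm // ltW.
by rewrite /hnorm ltr_sqrt // exprn_gt0.
Qed.

Lemma N_add x y : N (x + y) <= N x + N y.
Proof.
apply: N_le_sqr; first by rewrite addr_ge0 // N_ge0.
rewrite Q_add -!N_sqr; have := re_le x y; nra.
Qed.
Lemma N_scale r x : N (rc r *: x) = `|r| * N x.
Proof.
rewrite /hnorm (_ : complex.Re (ip _ _) = r ^+ 2 * Qi x); last exact: Q_scale.
by rewrite sqrtrM ?sqr_ge0 // sqrtr_sqr.
Qed.
Lemma N_eq0 x : N x = 0 -> x = 0.
Proof. by move=> h; apply: Q_eq0; rewrite -N_sqr h expr0n. Qed.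
Lemma N_sub x y : N (x - y) = N (y - x). Proof. by rewrite -N_opp opprB. Qed.
Lemma N0 : N 0 = 0. Proof. by rewrite /hnorm ip0l sqrtr0. Qed.

Lemma hdistE x y : hdist ip x y = N (x - y). Proof. by []. Qed.
Lemma hdist_sym x y : hdist ip x y = hdist ip y x. Proof. exact: N_sub. Qed.
Lemma hdist_tri x y z : hdist ip x z <= hdist ip x y + hdist ip y z.
Proof. by rewrite !hdistE (_ : x - z = (x - y) + (y - z)) ?N_add //; rewrite addrA subrK. Qed.

Lemma hcvg_unique u l1 l2 : hcvg ip u l1 -> hcvg ip u l2 -> l1 = l2.
Proof.
move=> h1 h2; apply/eqP; rewrite -subr_eq0; apply/eqP; apply: N_eq0.
apply/eqP; rewrite eq_le N_ge0 andbT; apply/ler_addgt0Pr => e e0.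
have e2 : 0 < e / 2 by rewrite divr_gt0.
have [N1 hN1] := h1 _ e2; have [N2 hN2] := h2 _ e2.
have a := hN1 (maxn N1 N2) (leq_maxl _ _); have b := hN2 (maxn N1 N2) (leq_maxr _ _).
have t := hdist_tri l1 (u (maxn N1 N2)) l2.
rewrite (hdist_sym l1 (u (maxn N1 N2))) in t.
rewrite -hdistE add0r; lra.
Qed.

Lemma hlim_eq u l : hcvg ip u l -> hlim ip u = l.
Proof.
move=> h; apply: (@hcvg_unique u _ _ _ h).
exact: (epsilon_spec (inhabits (0:H)) (hcvg ip u) (ex_intro _ l h)).
Qed.

Lemma hcvg_lin u v l l' r : hcvg ip u l -> hcvg ip v l' ->
  hcvg ip (fun n => u n + rc r *: v n) (l + rc r *: l').
Proof.
move=> hu hv e e0.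
have k0 : 0 < `|r| + 1 by rewrite ltr_pwDr // normr_ge0.
have e2 : 0 < e / 2 / (`|r| + 1) by rewrite !divr_gt0.
have e2' : 0 < e / 2 by rewrite divr_gt0.
have [N1 hN1] := hu _ e2'; have [N2 hN2] := hv _ e2.
exists (maxn N1 N2) => n hn.
have a := hN1 n (leq_trans (leq_maxl _ _) hn); have b := hN2 n (leq_trans (leq_maxr _ _) hn).
rewrite hdistE (_ : u n + rc r *: v n - (l + rc r *: l') = (u n - l) + rc r *: (v n - l')); last first.
  by rewrite scalerBr; rewrite opprD !addrA; congr (_ + _); rewrite addrAC.
apply: (le_lt_trans (N_add _ _)); rewrite N_scale -!hdistE.
have hb : `|r| * hdist ip (v n) l' <= (`|r| + 1) * (e / 2 / (`|r| + 1)).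
  apply: ler_pM; [exact: normr_ge0|exact: N_ge0|by rewrite lerDl|exact: ltW].
have ee : (`|r| + 1) * (e / 2 / (`|r| + 1)) = e / 2 by rewrite mulrC divfK // gt_eqF.
rewrite ee in hb; lra.
Qed.

Lemma hcvg_re u l z : hcvg ip u l ->
  forall e : R, 0 < e -> exists M, forall n, (M <= n)%N -> `|rei (u n) z - rei l z| < e.
Proof.
move=> h e e0.
have k0 : 0 < N z + 1 by have := N_ge0 z; lra.
have [M hM] := h _ (divr_gt0 e0 k0); exists M => n /hM hn.
rewrite -re_subl; apply: (le_lt_trans (re_abs_le _ _)).
rewrite -hdistE.
have : hdist ip (u n) l * N z <= e / (N z + 1) * N z.
  by apply: ler_wpM2r; [exact: N_ge0|exact: ltW].
have : e / (N z + 1) * N z < e.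
  rewrite mulrAC ltr_pdivrMr // ltr_pM2l //; lra.
lra.
Qed.

End IP.

Section Span.
Variables (R : realType) (H : lmodType R[i]) (ip : H -> H -> R[i]).
Hypothesis Hip : inner_product ip.
Variables (I : choiceType) (F : I -> H).
Local Notation N := (hnorm ip).
Local Notation span := (hspan F).
Local Notation K := (closed_span ip F).

Lemma sum_pred1 (s : seq I) j (v : H) :
  \sum_(i <- s | i == j) v = v *+ count (pred1 j) s.
Proof.
elim: s => [|a s IH]; first by rewrite big_nil.
rewrite big_cons /= IH; case: (a == j) => //=; by rewrite mulrS.
Qed.

Lemma span0 : span 0.
Proof. by exists [::], (fun _ => 0); rewrite big_nil. Qed.

Lemma span_add1 x a j : span x -> span (x + a *: F j).
Proof.
move=> [s [c ->]].
exists (j :: [seq i <- s | i != j]),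
  (fun i => if i == j then (count (pred1 j) s)%:R * c j + a else c i).
rewrite big_cons eqxx big_filter (bigID (fun i => i == j)) /=.
have e1 : \sum_(i <- s | i == j) c i *: F i = (c j *: F j) *+ count (pred1 j) s.
  by rewrite -sum_pred1; apply: eq_bigr => i /eqP ->.
have e2 : \sum_(i <- s | i != j)
    (if i == j then (count (pred1 j) s)%:R * c j + a else c i) *: F i =
    \sum_(i <- s | i != j) c i *: F i.
  by apply: eq_bigr => i /negbTE ->.
by rewrite e1 e2 scalerDl -scalerA scaler_nat; rewrite addrAC.
Qed.

Lemma span_add_sum x (s : seq I) c : span x -> span (x + \sum_(i <- s) c i *: F i).
Proof.
elim: s x => [|a s IH] x hx; first by rewrite big_nil addr0.
by rewrite big_cons addrA; apply: IH; apply: span_add1.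
Qed.

Lemma span_add x y : span x -> span y -> span (x + y).
Proof. by move=> hx [s [c ->]]; apply: span_add_sum. Qed.

Lemma span_scale a x : span x -> span (a *: x).
Proof.
move=> [s [c ->]]; exists s, (fun i => a * c i).
by rewrite scaler_sumr; apply: eq_bigr => i _; rewrite scalerA.
Qed.

Lemma span_sum (s : seq I) c : span (\sum_(i <- s) c i *: F i).
Proof. by exists s, c. Qed.

Lemma span_K x : span x -> K x.
Proof. by move=> hx e e0; exists x; split => //; rewrite hdistE subrr (N0 Hip). Qed.

Lemma N_comb a b a' b' r :
  N ((a + rc r *: b) - (a' + rc r *: b')) <= N (a - a') + `|r| * N (b - b').
Proof.
rewrite (_ : a + rc r *: b - (a' + rc r *: b') = (a - a') + rc r *: (b - b')); last first.
  by rewrite scalerBr opprD !addrA; congr (_ + _); rewrite addrAC.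
by rewrite -(N_scale Hip); apply: (N_add Hip).
Qed.

Lemma K_lin x y r : K x -> K y -> K (x + rc r *: y).
Proof.
move=> hx hy e e0.
have k0 : 0 < `|r| + 1 by rewrite ltr_pwDr // normr_ge0.
have e2 : 0 < e / 2 / (`|r| + 1) by rewrite !divr_gt0.
have e2' : 0 < e / 2 by rewrite divr_gt0.
have [x' [sx dx]] := hx _ e2'; have [y' [sy dy]] := hy _ e2.
exists (x' + rc r *: y'); split; first by apply: span_add => //; apply: span_scale.
rewrite hdistE; apply: (le_lt_trans (N_comb _ _ _ _ _)); rewrite -!hdistE.
have hb : `|r| * hdist ip y y' <= (`|r| + 1) * (e / 2 / (`|r| + 1)).
  apply: ler_pM; [exact: normr_ge0|exact: N_ge0|by rewrite lerDl|exact: ltW].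
have ee : (`|r| + 1) * (e / 2 / (`|r| + 1)) = e / 2 by rewrite mulrC divfK // gt_eqF.
rewrite ee in hb; lra.
Qed.

Lemma K_lim u l : (forall n, K (u n)) -> hcvg ip u l -> K l.
Proof.
move=> hK hc e e0; have e2 : 0 < e / 2 by rewrite divr_gt0.
have [M hM] := hc _ e2; have := hM M (leqnn M) => h1.
have [y [sy hy]] := hK M _ e2; exists y; split => //.
have t := hdist_tri Hip l (u M) y; rewrite (hdist_sym Hip l (u M)) in t; lra.
Qed.

Lemma K0 : K 0. Proof. exact: span_K span0. Qed.

End Span.

Lemma fsum_split (I : choiceType) (V : nmodType) (A B : {fset I}) (G : I -> V) :
  (A `<=` B)%fset -> \sum_(j <- B) G j = \sum_(j <- A) G j + \sum_(j <- (B `\` A)%fset) G j.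
Proof.
move=> sAB; rewrite (big_fsetID _ (mem A) B); congr (_ + _).
  apply: eq_fbigl => i; rewrite !inE /=; apply/andP/idP => [[]//|iA]; split => //.
  exact: (fsubsetP sAB).
by apply: eq_fbigl => i; rewrite !inE /= andbC.
Qed.

Section Frame.
Variables (R : realType) (H : lmodType R[i]) (ip : H -> H -> R[i]).
Hypothesis Hip : inner_product ip.
Hypothesis Hcompl : hcomplete ip.
Variables (I : choiceType) (Iseq : nat -> {fset I}).
Hypothesis Hnest : forall n, (Iseq n `<=` Iseq n.+1)%fset.
Hypothesis Hcover : forall i : I, exists n, i \in Iseq n.
Variables (F : I -> H) (A B : R).
Hypothesis hA : 0 < A.
Hypothesis hAB : A <= B.
Hypothesis hfr : forall g, closed_span ip F g ->
  ((A * hnorm ip g ^+ 2)%:E <= \esum_(i in [set: I]) (abs2 (ip g (F i)))%:E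
        <= (B * hnorm ip g ^+ 2)%:E)%E.

Local Notation N := (hnorm ip).
Local Notation K := (closed_span ip F).
Local Notation rei := (rei ip).
Local Notation Qi := (Qi ip).

Lemma hB : 0 < B. Proof. exact: lt_le_trans hA hAB. Qed.

Definition cc (h : H) (j : I) := ip h (F j).
Definition PP (D : seq I) (h : H) := \sum_(j <- D) cc h j *: F j.
Definition sig (D : seq I) (h : H) := \sum_(j <- D) abs2 (cc h j).
Definition Pn n h := PP (Iseq n) h.
Definition sn n h := sig (Iseq n) h.

Lemma sig_ge0 D h : 0 <= sig D h.
Proof. by apply: sumr_ge0 => j _; exact: abs2_ge0. Qed.

Lemma Iseq_sub n k : (n <= k)%N -> (Iseq n `<=` Iseq k)%fset.
Proof. by move=> nk; apply/fsubsetP => i hi; exact: (mono_in Hnest hi nk). Qed.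

Lemma cover_seq (s : seq I) : exists n, forall i, i \in s -> i \in Iseq n.
Proof.
elim: s => [|a s [n hn]]; first by exists 0%N.
have [m hm] := Hcover a; exists (maxn n m) => i; rewrite inE => /orP [/eqP ->|/hn h].
  exact: (mono_in Hnest hm (leq_maxr _ _)).
exact: (mono_in Hnest h (leq_maxl _ _)).
Qed.

Lemma re_comb (D : seq I) (a : I -> R[i]) z :
  rei (\sum_(j <- D) a j *: F j) z = \sum_(j <- D) complex.Re (a j * (cc z j)^*).
Proof.
rewrite /rei /rei ip_suml // cRe_sum; apply: eq_bigr => j _.
by rewrite ip_scalel // (ip_conj Hip z (F j)).
Qed.

Lemma re_PP_self D h : rei (PP D h) h = sig D h.
Proof. by rewrite /PP re_comb. Qed.

Lemma frame_up (D : {fset I}) h : K h -> sig D h <= B * Qi h.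
Proof.
move=> Kh; have /andP [_ hu] := hfr Kh.
rewrite -(N_sqr Hip) -lee_fin; apply: le_trans hu.
rewrite /sig -sumEFin (fsbig_seq _ _ (fset_uniq D)).
apply: esum_ge; exists [set` D] => //; split => //; exact: finite_fset.
Qed.

Lemma sn_split n k h : (n <= k)%N -> sn k h = sn n h + sig (Iseq k `\` Iseq n)%fset h.
Proof. by move=> nk; rewrite /sn /sig (fsum_split _ (Iseq_sub nk)). Qed.

Lemma Pn_split n k h : (n <= k)%N -> Pn k h = Pn n h + PP (Iseq k `\` Iseq n)%fset h.
Proof. by move=> nk; rewrite /Pn /PP (fsum_split _ (Iseq_sub nk)). Qed.

Lemma sn_mono n k h : (n <= k)%N -> sn n h <= sn k h.
Proof. by move=> nk; rewrite (sn_split h nk) lerDl sig_ge0. Qed.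

Lemma frame_low h e : K h -> 0 < e -> exists n, A * Qi h - e < sn n h.
Proof.
move=> Kh e0; have /andP [hl _] := hfr Kh.
have : ((A * Qi h - e)%:E < \esum_(i in [set: I]) (abs2 (ip h (F i)))%:E)%E.
  by apply: lt_le_trans hl; rewrite -(N_sqr Hip) lte_fin; lra.
move=> /ereal_sup_gt [_ [X [finX _] <-]].
rewrite fsbig_finite // sumEFin lte_fin => hX.
have [n hn] := cover_seq (fset_set X); exists n.
apply: (lt_le_trans hX).
have sub : (fset_set X `<=` Iseq n)%fset by apply/fsubsetP => i /hn.
by rewrite /sn /sig (fsum_split _ sub) lerDl sig_ge0.
Qed.

Lemma bessel (D : {fset I}) (a : I -> R[i]) :
  Qi (\sum_(j <- D) a j *: F j) <= B * \sum_(j <- D) abs2 (a j).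
Proof.
set v := \sum_(j <- D) a j *: F j.
have Kv : K v by apply: span_K => //; exact: span_sum.
have h1 : 2 * Qi v <= B * \sum_(j <- D) abs2 (a j) + B^-1 * sig D v.
  rewrite /Qi /Qi {2}/v re_comb mulr_sumr /sig !mulr_sumr -big_split /=.
  by apply: ler_sum => j _; apply: amgm; exact: hB.
have h2 := frame_up D Kv.
have hB0 := hB.
have h3 : B^-1 * sig D v <= Qi v.
  rewrite -(ler_pM2l hB0) mulrA divff ?gt_eqF // mul1r; exact: h2.
lra.
Qed.

Lemma sn_bound n h : K h -> sn n h <= B * Qi h.
Proof. by move=> Kh; exact: frame_up. Qed.

Lemma Pn_cauchy h : K h -> hcauchy ip (fun n => Pn n h).
Proof.
move=> Kh e e0.
pose E := range (fun n => sn n h).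
have hsup : has_sup E.
  split; first by exists (sn 0 h), 0%N.
  by exists (B * Qi h) => _ [n _ <-]; exact: sn_bound.
have d0 : 0 < e ^+ 2 / B by rewrite divr_gt0 ?exprn_gt0 ?hB.
have [_ [M _ <-] hM] := sup_adherent d0 hsup.
have key : forall n k, (M <= n)%N -> (n <= k)%N -> hdist ip (Pn n h) (Pn k h) < e.
  move=> n k Mn nk; rewrite hdist_sym // hdistE (Pn_split h nk) addrC addKr.
  apply: N_lt_sqr => //; apply: (le_lt_trans (bessel _ _)).
  have hB0 := hB.
  have hk : sn k h <= sup E by apply: sup_upper_bound => //; exists k.
  have hMn := sn_mono h Mn.
  have hs : sig (Iseq k `\` Iseq n)%fset h = sn k h - sn n h by rewrite (sn_split h nk); ring.
  have h1 : B * (sup E - sn M h) < e ^+ 2.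
    by rewrite -ltr_pdivlMl // mulrC; lra.
  have h2 : B * sig (Iseq k `\` Iseq n)%fset h <= B * (sup E - sn M h).
    by rewrite ler_pM2l // hs; lra.
  rewrite -/(sig _ h); lra.
exists M => n k Mn Mk; have [nk|kn] := leqP n k; first exact: key.
by rewrite hdist_sym //; apply: key => //; exact: ltnW.
Qed.


Definition Sop (h : H) := frame_op ip Iseq F h.

Lemma S_cvg h : K h -> hcvg ip (fun n => Pn n h) (Sop h).
Proof.
move=> Kh; have [l hl] := Hcompl (Pn_cauchy Kh).
by rewrite /Sop /frame_op (_ : hlim ip _ = l) //; exact: hlim_eq hl.
Qed.

Lemma S_K h : K h -> K (Sop h).
Proof.
move=> Kh; apply: (K_lim Hip _ (S_cvg Kh)) => n.
by apply: span_K => //; exact: span_sum.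
Qed.

Lemma Pn_lin n x y r : Pn n (x + rc r *: y) = Pn n x + rc r *: Pn n y.
Proof.
rewrite /Pn /PP scaler_sumr -big_split; apply: eq_bigr => j _.
by rewrite /cc ip_addl // ip_scalel // scalerDl scalerA.
Qed.

Lemma S_lin x y r : K x -> K y -> Sop (x + rc r *: y) = Sop x + rc r *: Sop y.
Proof.
move=> Kx Ky; rewrite {1}/Sop /frame_op; apply: hlim_eq => //.
have := hcvg_lin Hip r (S_cvg Kx) (S_cvg Ky).
have -> : (fun n => Pn n x + rc r *: Pn n y) = (fun n => \sum_(i <- Iseq n) ip (x + rc r *: y) (F i) *: F i).
  by apply: funext => n; rewrite -Pn_lin.
by [].
Qed.

Definition NS h := rei (Sop h) h.

Lemma re_Pn_self n h : rei (Pn n h) h = sn n h.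
Proof. exact: re_PP_self. Qed.

Lemma NS_props h : K h -> [/\ forall n, sn n h <= NS h, NS h <= B * Qi h & A * Qi h <= NS h].
Proof.
move=> Kh; have hc := hcvg_re Hip h (S_cvg Kh).
have lower : forall n, sn n h <= NS h.
  move=> n; apply/ler_addgt0Pr => e e0.
  have [M hM] := hc e e0; have := hM (maxn n M) (leq_maxr _ _).
  rewrite re_Pn_self ltr_norml => /andP [_ h2].
  have := sn_mono h (leq_maxl n M); rewrite /NS; lra.
split => //.
  apply/ler_addgt0Pr => e e0.
  have [M hM] := hc e e0; have := hM M (leqnn M).
  rewrite re_Pn_self ltr_norml => /andP [h1 _].
  have := sn_bound M Kh; rewrite /NS; lra.
apply/ler_addgt0Pr => e e0.
have [n hn] := frame_low Kh e0; have := lower n; lra.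
Qed.

Lemma QS_le h : K h -> Qi (Sop h) <= B * NS h.
Proof.
move=> Kh; have [lower _ _] := NS_props Kh.
have KS := S_K Kh.
have hB0 := hB.
have hc := hcvg_re Hip (Sop h) (S_cvg Kh).
have bnd : forall n, 2 * rei (Pn n h) (Sop h) <= B * NS h + Qi (Sop h).
  move=> n; rewrite /Pn /PP re_comb mulr_sumr.
  apply: (@le_trans _ _ (\sum_(j <- Iseq n) (B * abs2 (cc h j) + B^-1 * abs2 (cc (Sop h) j)))).
    by apply: ler_sum => j _; apply: amgm.
  rewrite big_split /= -!mulr_sumr -/(sig _ h) -/(sig _ (Sop h)) -/(sn n h) -/(sn n (Sop h)).
  have h1 : B * sn n h <= B * NS h by rewrite ler_pM2l.
  have h2 := sn_bound n KS.
  have h3 : B^-1 * sn n (Sop h) <= Qi (Sop h).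
    by rewrite -(ler_pM2l hB0) mulrA divff ?gt_eqF // mul1r.
  lra.
apply/ler_addgt0Pr => e e0.
have e2 : 0 < e / 2 by rewrite divr_gt0.
have [M hM] := hc _ e2; have := hM M (leqnn M); rewrite ltr_norml => /andP [h1 _].
have := bnd M; rewrite /Qi; lra.
Qed.

Lemma contraction h : K h -> Qi (h - rc B^-1 *: Sop h) <= (1 - A / B) * Qi h.
Proof.
move=> Kh; have [_ _ hlow] := NS_props Kh; have hq := QS_le Kh.
have hB0 := hB.
rewrite Q_sub // re_scaler // Q_scale // (re_sym Hip h (Sop h)) -/(NS h).
have bb : B^-1 * B = 1 by rewrite mulVf // gt_eqF.
have bi : 0 < B^-1 by rewrite invr_gt0.
have hQ := Q_ge0 Hip h.
have e1 : B^-1 ^+ 2 * Qi (Sop h) <= B^-1 ^+ 2 * (B * NS h) by rewrite ler_pM2l // exprn_gt0.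
have e2 : B^-1 ^+ 2 * (B * NS h) = B^-1 * NS h by rewrite expr2 -mulrA (mulrA _ B) bb mul1r.
have e3 : A / B * Qi h <= B^-1 * NS h.
  rewrite (_ : A / B * Qi h = B^-1 * (A * Qi h)); last by ring.
  by rewrite ler_pM2l.
lra.
Qed.

Lemma S_bounded h : K h -> hnorm ip (Sop h) <= B * hnorm ip h.
Proof.
move=> Kh; have hq := QS_le Kh; have hB0 := hB.
have hr := re_le Hip (Sop h) h.
rewrite -/(NS h) in hr.
have n1 := N_ge0 ip (Sop h); have n2 := N_ge0 ip h.
rewrite -(N_sqr Hip) in hq.
have : hnorm ip (Sop h) ^+ 2 <= B * (hnorm ip (Sop h) * hnorm ip h).
  by apply: le_trans hq _; rewrite ler_pM2l.
have [z|nz] := eqVneq (hnorm ip (Sop h)) 0; first by rewrite z mulr_ge0 // ltW.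
have p : 0 < hnorm ip (Sop h) by rewrite lt0r nz.
by rewrite expr2 (mulrC B) -mulrA ler_pM2l // mulrC.
Qed.

Fixpoint rich (f : H) (k : nat) : H :=
  if k is k'.+1 then rich f k' + rc B^-1 *: (f - Sop (rich f k')) else 0.
Definition ww f k := f - Sop (rich f k).

Lemma subE (x y : H) : x - y = x + rc (-1) *: y.
Proof. by rewrite rcN1 scaleN1r. Qed.

Lemma rich_K f k : K f -> K (rich f k) /\ K (ww f k).
Proof.
move=> Kf; elim: k => [|k [IH1 IH2]].
  have K0' : K 0 := K0 Hip F.
  by split => //; rewrite /ww subE; apply: K_lin => //; exact: S_K.
have Kr : K (rich f k.+1) by rewrite /=; apply: K_lin.
by split => //; rewrite /ww subE; apply: K_lin => //; exact: S_K.
Qed.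

Lemma ww_succ f k : K f -> ww f k.+1 = ww f k - rc B^-1 *: Sop (ww f k).
Proof.
move=> Kf; have [K1 K2] := rich_K k Kf.
rewrite /ww /= S_lin //; rewrite opprD addrA.
by rewrite -/(ww f k).
Qed.

Definition qq := 1 - A / B.
Definition rho := Num.sqrt qq.

Lemma qq_ge0 : 0 <= qq.
Proof. have hB0 := hB; by rewrite /qq subr_ge0 ler_pdivrMr // mul1r. Qed.
Lemma qq_lt1 : qq < 1.
Proof. have hB0 := hB; by rewrite /qq ltrBlDr ltrDl divr_gt0. Qed.
Lemma rho_ge0 : 0 <= rho. Proof. exact: sqrtr_ge0. Qed.
Lemma rho_lt1 : rho < 1.
Proof. by rewrite /rho -sqrtr1 ltr_sqrt ?ltr01 // qq_lt1. Qed.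

Lemma ww_Q f k : K f -> Qi (ww f k) <= qq ^+ k * Qi (ww f 0).
Proof.
move=> Kf; elim: k => [|k IH]; first by rewrite expr0 mul1r.
have [_ Kw] := rich_K k Kf.
rewrite ww_succ //; apply: (le_trans (contraction Kw)).
rewrite exprS -mulrA; apply: ler_wpM2l; first exact: qq_ge0.
exact: IH.
Qed.

Lemma ww_N f k : K f -> hnorm ip (ww f k) <= rho ^+ k * hnorm ip (ww f 0).
Proof.
move=> Kf; apply: N_le_sqr => //.
  by apply: mulr_ge0; [exact: exprn_ge0 rho_ge0|exact: N_ge0].
rewrite exprMn -exprM mulnC exprM /rho sqr_sqrtr ?qq_ge0 // (N_sqr Hip).
exact: ww_Q.
Qed.

Lemma rich_step f k : rich f k.+1 - rich f k = rc B^-1 *: ww f k.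
Proof. by rewrite /= addrAC subrr add0r. Qed.

Lemma geo_sum (n m : nat) : \sum_(j < m) rho ^+ (n + j) * (1 - rho) = rho ^+ n - rho ^+ (n + m).
Proof.
elim: m => [|m IH]; first by rewrite big_ord0 addn0 subrr.
by rewrite big_ord_recr /= IH addnS exprS; ring.
Qed.

Lemma geo_le (n m : nat) : \sum_(j < m) rho ^+ (n + j) <= rho ^+ n / (1 - rho).
Proof.
have r1 : 0 < 1 - rho by rewrite subr_gt0 rho_lt1.
rewrite ler_pdivlMr // mulr_suml geo_sum gerBl exprn_ge0 //; exact: rho_ge0.
Qed.

Lemma rich_bound f n m : K f ->
  hnorm ip (rich f (n + m) - rich f n) <= B^-1 * hnorm ip (ww f 0) * \sum_(j < m) rho ^+ (n + j).
Proof.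
move=> Kf; have hB0 := hB.
elim: m => [|m IH]; first by rewrite addn0 subrr (N0 Hip) big_ord0 mulr0.
rewrite big_ord_recr /= mulrDr.
have -> : rich f (n + m.+1) - rich f n = (rich f (n + m).+1 - rich f (n + m)) + (rich f (n + m) - rich f n).
  by rewrite addnS addrA subrK.
apply: (le_trans (N_add Hip _ _)); rewrite rich_step (N_scale Hip) ger0_norm; last by rewrite invr_ge0 ltW.
have := ww_N (n + m) Kf.
have bi : 0 <= B^-1 by rewrite invr_ge0 ltW.
move=> hw; rewrite [X in _ <= X]addrC; apply: lerD; last exact: IH.
by rewrite -mulrA; apply: ler_wpM2l => //; rewrite mulrC.
Qed.

Lemma geo_small (a : R) : forall e : R, 0 < e -> exists M, forall n, (M <= n)%N -> a * rho ^+ n < e.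
Proof.
have hr : `|rho| < 1 by rewrite ger0_norm ?rho_ge0 ?rho_lt1.
move=> e e0.
have := cvg_geometric a hr.
move/cvgrPdist_lt => /(_ e e0) [M _ hM].
exists M => n /hM /=; rewrite sub0r normrN /geometric /=.
move=> h; exact: le_lt_trans (ler_norm _) h.
Qed.

Lemma exists_sol f : K f -> exists g, K g /\ Sop g = f.
Proof.
move=> Kf; have hB0 := hB.
have r1 : 0 < 1 - rho by rewrite subr_gt0 rho_lt1.
set C := B^-1 * hnorm ip (ww f 0).
have C0 : 0 <= C by apply: mulr_ge0; [rewrite invr_ge0 ltW|exact: N_ge0].
have tail : forall n0 n, (n0 <= n)%N -> hnorm ip (rich f n - rich f n0) <= C * (rho ^+ n0 / (1 - rho)).
  move=> n0 n hn; rewrite -(subnKC hn); apply: (le_trans (rich_bound n0 (n - n0) Kf)).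
  by apply: ler_wpM2l => //; exact: geo_le.
have cauchy : hcauchy ip (rich f).
  move=> e e0; have e2 : 0 < e / 2 by rewrite divr_gt0.
  have [M hM] := geo_small (C / (1 - rho)) e2.
  exists M => n k hn hk.
  have t := hdist_tri Hip (rich f n) (rich f M) (rich f k).
  have a1 := tail M n hn; have a2 := tail M k hk.
  rewrite (hdist_sym Hip (rich f M) (rich f k)) !hdistE in t; rewrite hdistE.
  have := hM M (leqnn M).
  rewrite (_ : C / (1 - rho) * rho ^+ M = C * (rho ^+ M / (1 - rho))); last by ring.
  lra.
have [g hg] := Hcompl cauchy.
have Kg : K g by apply: (K_lim Hip _ hg) => k; have [] := rich_K k Kf.
exists g; split => //.
apply: (@hcvg_unique _ _ _ Hip (fun k => Sop (rich f k))).
- move=> e e0; have e' : 0 < e / B by rewrite divr_gt0.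
  have [M hM] := hg _ e'; exists M => n /hM hn.
  have [Kr _] := rich_K n Kf.
  have Kd : K (rich f n + rc (-1) *: g) by apply: K_lin.
  rewrite hdistE subE -S_lin //; apply: (le_lt_trans (S_bounded Kd)).
  by rewrite -subE -hdistE -ltr_pdivlMl // mulrC.
- move=> e e0; have [M hM] := geo_small (hnorm ip (ww f 0)) e0.
  exists M => n /hM hn.
  rewrite hdistE (_ : Sop (rich f n) - f = - ww f n); last by rewrite /ww opprB.
  rewrite (N_opp Hip); apply: (le_lt_trans (ww_N n Kf)); by rewrite mulrC.
Qed.

Lemma sum1_seq (s : seq I) : \sum_(j <- s) (1 : R) = (size s)%:R.
Proof. by elim: s => [|a s IH]; rewrite ?big_nil // big_cons IH /= -add1n natrD. Qed.

Lemma dual_bound i : 0 <= complex.Re (ip (F i) (canonical_dual ip Iseq F i)) <= 1.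
Proof.
have Kf : K (F i).
  apply: span_K => //; exists [:: i], (fun _ => 1).
  by rewrite big_cons big_nil addr0 scale1r.
have [g [Kg Sg]] := exists_sol Kf.
have [Kd Sd] : K (canonical_dual ip Iseq F i) /\ Sop (canonical_dual ip Iseq F i) = F i.
  exact: (epsilon_spec (inhabits (0:H))
    (fun g => closed_span ip F g /\ frame_op ip Iseq F g = F i) (ex_intro _ g (conj Kg Sg))).
set d := canonical_dual ip Iseq F i in Kd Sd *.
have hs : complex.Re (ip (F i) d) = NS d by rewrite /NS -Sd.
rewrite hs; have [lower _ _] := NS_props Kd.
have s0 : 0 <= NS d by apply: le_trans (lower 0%N); exact: sig_ge0.
have [n hn] := Hcover i.
have h1 : abs2 (cc d i) <= sn n d.
  rewrite /sn /sig (bigD1_seq i hn (fset_uniq _)) /= lerDl.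
  by apply: sumr_ge0 => j _; exact: abs2_ge0.
have h2 : NS d ^+ 2 <= abs2 (cc d i).
  rewrite /cc (ip_conj Hip (F i) d) abs2J abs2E -hs lerDl; exact: sqr_ge0.
have h3 := lower n.
apply/andP; split => //; nra.
Qed.

Lemma b_fc : frame_compatible Iseq (b_seq ip Iseq F).
Proof.
have t01 := dual_bound.
have hsum : forall D : seq I, 0 <= \sum_(j <- D) complex.Re (ip (F j) (canonical_dual ip Iseq F j)) <= (size D)%:R.
  move=> D; apply/andP; split.
    by apply: sumr_ge0 => j _; case/andP: (t01 j).
  rewrite -sum1_seq; apply: ler_sum => j _; by case/andP: (t01 j).
split.
- by move=> n; case/andP: (hsum (Iseq n)).
- exact: hsum.
- move=> n; rewrite /b_seq (fsum_split _ (Iseq_sub (leqnSn n))) addrAC subrr add0r.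
  exact: hsum.
Qed.

End Frame.


Lemma b_XR (R : realType) (H : lmodType R[i]) (ip : H -> H -> R[i])
  (Hip : inner_product ip) (Hcompl : hcomplete ip) (I : choiceType) (Iseq : nat -> {fset I})
  (Hnest : forall n, (Iseq n `<=` Iseq n.+1)%fset)
  (Hcover : forall i : I, exists n, i \in Iseq n) (F : I -> H) :
  frame_for_span ip F -> XR Iseq (b_seq ip Iseq F).
Proof.
move=> [A [B [hA [hB hfr]]]].
have hA' : 0 < Num.min A B by rewrite lt_min hA hB.
have hAB : Num.min A B <= B by rewrite ge_min lexx orbT.
have hfr' : forall g, closed_span ip F g ->
  ((Num.min A B * hnorm ip g ^+ 2)%:E <= \esum_(i in [set: I]) (abs2 (ip g (F i)))%:E
        <= (B * hnorm ip g ^+ 2)%:E)%E.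
  move=> g Kg; have /andP [h1 h2] := hfr g Kg; rewrite h2 andbT.
  apply: le_trans h1; rewrite lee_fin ler_wpM2r ?sqr_ge0 //.
  by rewrite ge_min lexx.
apply: Xplus_XR; exists 1, (b_seq ip Iseq F); split; first exact: ler01.
split; first exact: (b_fc Hip Hcompl Hnest Hcover hA' hAB hfr').
by apply: funext => n; rewrite mul1r.
Qed.

Unset Implicit Arguments.

Theorem corollary5p24 (R : realType) (I : choiceType) (Iseq : nat -> {fset I})
  (Hnest : forall n, (Iseq n `<=` Iseq n.+1)%fset)
  (Hcover : forall i : I, exists n, i \in Iseq n)
  (Hne : inhabited I)
  (H : lmodType R[i]) (ip : H -> H -> R[i])
  (Hip : inner_product ip) (Hcompl : hcomplete ip) (Hsep : hseparable ip)
  (W : topologicalType) (HWc : compact [set: W]) (HWh : hausdorff_space W)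
  (m : (nat -> R) -> W -> R) (Hm : sequence_measure_function Iseq m)
  (p : set_system nat) (Hp : free_ultrafilter p) :
  exists w : W, forall F : I -> H, frame_for_span ip F ->
    ultra_mu ip Iseq F p = m (b_seq ip Iseq F) w.
Proof.
case: Hp => pU pfree.
have [w hw] := exists_w Hnest Hcover Hne HWc Hm pU pfree.
exists w => F hF; rewrite (hw _ (b_XR Hip Hcompl Hnest Hcover hF)).
by [].
Qed.
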